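(* Let $x\in X$ with ${\cal E}_J(x)=\emptyset$. Then for every sequence $(x^{(k)})_{k\in\mathbb N}$ in $X$ converging to $x$ and every $i\in I$, $\rho_i(x^{(k)})\to\rho_i(x)$ (where, if $\rho_i(x)=-\infty$, this means $\rho_i(x^{(k)})=-\infty$ for all sufficiently large $k$). Equivalently, if $\rho=(\rho_i)_{i\in I}$ restricted to $X$ is not continuous at $x\in X$, then ${\cal E}_J(x)\ne\emptyset$.
   Context: $I$ is a finite set of players, $A_i$ finite nonempty action sets, $A=\prod_iA_i$, $r_i:A\to(0,1]$, $p:A\to[0,1]$. Let $\Xi=\prod_i\Delta(A_i)$; for $x\in\Xi$, $p(x)=\sum_ap(a)\prod_jx_j(a_j)$ and, if $p(x)>0$, $r_i(x)=\sum_ar_i(a)p(a)\prod_jx_j(a_j)/p(x)$ (also applied to partially pure profiles). $X:=\{x\in\Xi:p(x)=0\}$ is the set of nonabsorbing mixed action profiles. $\rho_i(x):=\max\{r_i(a_i,x_{-i}):a_i\in A_i,\ p(a_i,x_{-i})>0\}$, with $\max\emptyset=-\infty$ (so $\rho_i$ takes values in $\{-\infty\}\cup(0,1]$). For $x\in X$, a pair $(J,a_J)$ with $\emptyset\ne J\subseteq I$, $a_J\in\prod_{i\in J}A_i$ is an exit at $x$ if $p(a_J,x_{-J})>0$ and $p(a_{J'},x_{-J'})=0$ for every proper subset $J'\subsetneq J$; it is a joint exit if $|J|\ge2$; ${\cal E}_J(x)$ is the set of joint exits at $x$. *)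

(* Defs.v *)
From HB Require Import structures.
From mathcomp Require Import all_boot all_order all_algebra.
From mathcomp Require Import all_classical all_reals topology normedtype sequences.
Set Implicit Arguments. Unset Strict Implicit. Unset Printing Implicit Defensive.
Import Order.TTheory GRing.Theory Num.Theory numFieldNormedType.Exports.
Local Open Scope classical_set_scope.
Local Open Scope ring_scope.

Section Game.
Variables (R : realType) (I : finType) (A : I -> finType).

Definition profile := {dffun forall i : I, A i}.

Definition mprofile := forall i : I, A i -> R.

Definition is_mixed (x : mprofile) : Prop :=
  forall i, (forall a, 0 <= x i a) /\ \sum_(a : A i) x i a = 1.

Definition pmix (p : profile -> R) (x : mprofile) : R :=
  \sum_(a : profile) p a * \prod_(j : I) x j (a j).

Definition rmix (p : profile -> R) (ri : profile -> R) (x : mprofile) : R :=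
  (\sum_(a : profile) ri a * p a * \prod_(j : I) x j (a j)) / pmix p x.

Definition nonabs (p : profile -> R) (x : mprofile) : Prop :=
  is_mixed x /\ pmix p x = 0.

(* (a_i, x_{-i}) : player i plays pure action a, the others play x *)
Definition dev (i : I) (a : A i) (x : mprofile) : mprofile :=
  fun j b => if j == i then (Tagged (fun k => A k) b == Tagged (fun k => A k) a)%:R
             else x j b.

(* (a_J, x_{-J}) : players in J play the pure actions aJ j, others play x;
   the components of aJ outside J are irrelevant. *)
Definition mixJ (J : {set I}) (aJ : profile) (x : mprofile) : mprofile :=
  fun j b => if j \in J then (b == aJ j)%:R else x j b.

(* rho_i(x); None encodes -infinity (max over the empty set).  All candidate
   values are > 0, so the max with neutral element 0 is the true maximum. *)
Definition rho (p : profile -> R) (r : I -> profile -> R) (i : I) (x : mprofile)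
  : option R :=
  if [exists a : A i, 0 < pmix p (dev a x)] then
    Some (\big[Num.max/0]_(a : A i | 0 < pmix p (dev a x)) rmix p (r i) (dev a x))
  else None.

Definition is_exit (p : profile -> R) (x : mprofile) (J : {set I}) (aJ : profile)
  : Prop :=
  J != finset.set0 /\ 0 < pmix p (mixJ J aJ x) /\
  forall J' : {set I}, J' \proper J -> pmix p (mixJ J' aJ x) = 0.

Definition no_joint_exit (p : profile -> R) (x : mprofile) : Prop :=
  forall (J : {set I}) (aJ : profile), (2 <= #|J|)%N -> ~ is_exit p x J aJ.

End Game.

(* convergence in {-oo} u R, with -oo isolated: if the limit is -oo the
   sequence is eventually -oo; otherwise it is eventually finite and converges *)
Definition rho_cvg (R : realType) (u : nat -> option R) (l : option R) : Prop :=
  match l with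
  | None => \forall k \near \oo, u k = None
  | Some v => (\forall k \near \oo, u k != None) /\
              (fun k => odflt 0 (u k)) @ \oo --> v
  end.

(* Main.v *)
Require Import Defs.
From HB Require Import structures.
From mathcomp Require Import all_boot all_order all_algebra.
From mathcomp Require Import all_classical all_reals topology normedtype sequences.
Import Order.TTheory GRing.Theory Num.Theory numFieldNormedType.Exports.
Local Open Scope classical_set_scope.
Local Open Scope ring_scope.

Set Implicit Arguments.

Lemma cvg_big (R : realType) (T : Type) (op : R -> R -> R) (idx : R)
  (hop : forall (fu fv : nat -> R) (u v : R), fu @ \oo --> u -> fv @ \oo --> v ->
     (fun k => op (fu k) (fv k)) @ \oo --> op u v)
  (s : seq T) (P : pred T) (f : nat -> T -> R) (g : T -> R) :
  (forall t, P t -> (fun k => f k t) @ \oo --> g t) ->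
  (fun k => \big[op/idx]_(t <- s | P t) f k t) @ \oo --> \big[op/idx]_(t <- s | P t) g t.
Proof.
move=> hf; elim: s => [|t s IH].
  rewrite big_nil.
  have -> : (fun k => \big[op/idx]_(t <- [::] | P t) f k t) = fun=> idx.
    by apply: funext => k; rewrite big_nil.
  exact: cvg_cst.
rewrite big_cons.
have -> : (fun k => \big[op/idx]_(t0 <- t :: s | P t0) f k t0) = fun k =>
   if P t then op (f k t) (\big[op/idx]_(t0 <- s | P t0) f k t0)
   else \big[op/idx]_(t0 <- s | P t0) f k t0.
  by apply: funext => k; rewrite big_cons.
case: ifP => Pt //.
by apply: hop => //; apply: hf.
Qed.

Lemma hop_add (R : realType) (fu fv : nat -> R) (u v : R) : fu @ \oo --> u -> fv @ \oo --> v ->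
     (fun k => fu k + fv k) @ \oo --> u + v.
Proof. move=> hu hv; exact: cvgD hu hv. Qed.

Lemma hop_mul (R : realType) (fu fv : nat -> R) (u v : R) : fu @ \oo --> u -> fv @ \oo --> v ->
     (fun k => fu k * fv k) @ \oo --> u * v.
Proof. move=> hu hv; exact: cvgM hu hv. Qed.

Lemma hop_max (R : realType) (fu fv : nat -> R) (u v : R) : fu @ \oo --> u -> fv @ \oo --> v ->
     (fun k => Num.max (fu k) (fv k)) @ \oo --> Num.max u v.
Proof.
move=> hu hv.
rewrite maxr_absE.
under eq_fun => k do rewrite maxr_absE.
apply: cvgM; [|exact: cvg_cst]; apply: cvgD; first exact: cvgD.
by apply: cvg_norm; apply: cvgB.
Qed.

Section Helpers.
Context (R : realType) (I : finType) (A : I -> finType).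
Implicit Types (p : profile A -> R) (y z : mprofile R A).

Lemma pmix_cvg p (y : nat -> mprofile R A) z :
  (forall j c, (fun k => y k j c) @ \oo --> z j c) ->
  (fun k => pmix p (y k)) @ \oo --> pmix p z.
Proof.
move=> h; rewrite /pmix; apply: cvg_big; first exact: hop_add.
move=> a _; apply: hop_mul; first exact: cvg_cst.
apply: cvg_big; first exact: hop_mul.
by move=> j _; apply: h.
Qed.

Lemma rmix_cvg p ri (y : nat -> mprofile R A) z :
  (forall j c, (fun k => y k j c) @ \oo --> z j c) -> pmix p z != 0 ->
  (fun k => rmix p ri (y k)) @ \oo --> rmix p ri z.
Proof.
move=> h hz; rewrite /rmix; apply: hop_mul.
  apply: cvg_big; first exact: hop_add.
  move=> a _; apply: hop_mul; first exact: cvg_cst.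
  apply: cvg_big; first exact: hop_mul.
  by move=> j _; apply: h.
by apply: cvgV => //; apply: pmix_cvg.
Qed.

Lemma pmix_ext p y z : (forall j c, y j c = z j c) -> pmix p y = pmix p z.
Proof.
move=> h; rewrite /pmix; apply: eq_bigr => a _; congr (_ * _).
by apply: eq_bigr => j _; rewrite h.
Qed.

Lemma pmix_ge_term p y b : (forall a, 0 <= p a) -> (forall j c, 0 <= y j c) ->
  p b * \prod_j y j (b j) <= pmix p y.
Proof.
move=> hp hy; rewrite /pmix (bigD1 b) //= lerDl.
apply: sumr_ge0 => d _; apply: mulr_ge0 => //.
by apply: prodr_ge0 => j _.
Qed.

Lemma pmix_ge0 p y : (forall a, 0 <= p a) -> (forall j c, 0 <= y j c) ->
  0 <= pmix p y.
Proof.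
move=> hp hy; rewrite /pmix.
apply: sumr_ge0 => d _; apply: mulr_ge0 => //.
by apply: prodr_ge0 => j _.
Qed.

Lemma key_ineq p y (b : profile A) j : (forall a, 0 <= p a) -> (forall j c, 0 <= y j c) ->
  y j (b j) * pmix p (mixJ [set j]%SET b y) <= pmix p y.
Proof.
move=> hp hy; rewrite /pmix mulr_sumr; apply: ler_sum => d _.
rewrite /mixJ (bigD1 j) //= [X in _ <= _ * X](bigD1 j) //=.
rewrite !inE eqxx.
under eq_bigr => l hl do rewrite inE (negbTE hl).
case: (eqVneq (d j) (b j)) => e.
  by rewrite e mul1r mulrCA.
rewrite mul0r mulr0 mulr0.
apply: mulr_ge0 => //; apply: mulr_ge0 => //; apply: prodr_ge0 => l _.
done.
Qed.

Lemma dev_ii y i (a c : A i) : @dev R I A i a y i c = (c == a)%:R.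
Proof. by rewrite /dev eqxx eq_Tagged. Qed.

Lemma dev_ij y i (a : A i) j (c : A j) : j != i -> @dev R I A i a y j c = y j c.
Proof. by move=> h; rewrite /dev (negbTE h). Qed.

Lemma dev_ge0 y i (a : A i) j c : (forall j c, 0 <= y j c) -> 0 <= @dev R I A i a y j c.
Proof. by move=> hy; rewrite /dev; case: ifP => _ //; exact: ler0n. Qed.

Lemma mixJ_ge0 y J b j c : (forall j c, 0 <= y j c) -> 0 <= @mixJ R I A J b y j c.
Proof. by move=> hy; rewrite /mixJ; case: ifP => _ //; exact: ler0n. Qed.

Lemma dev_cvg (y : nat -> mprofile R A) z i (a : A i) :
  (forall j c, (fun k => y k j c) @ \oo --> z j c) ->
  forall j c, (fun k => @dev R I A i a (y k) j c) @ \oo --> @dev R I A i a z j c.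
Proof.
move=> h j c; rewrite /dev; case: eqP => _; [exact: cvg_cst | exact: h].
Qed.

Lemma mixJ_cvg (y : nat -> mprofile R A) z J b :
  (forall j c, (fun k => y k j c) @ \oo --> z j c) ->
  forall j c, (fun k => @mixJ R I A J b (y k) j c) @ \oo --> @mixJ R I A J b z j c.
Proof.
move=> h j c; rewrite /mixJ; case: ifP => _; [exact: cvg_cst | exact: h].
Qed.

End Helpers.


Lemma zero_eventually (R : realType) (I : finType) (A : I -> finType) (p : profile A -> R)
 (hp : forall a, 0 <= p a) (x : mprofile R A) (hx : nonabs p x) (hE : no_joint_exit p x)
 (xs : nat -> mprofile R A) (hxs : forall k, nonabs p (xs k))
 (hcvg : forall i (a : A i), (fun k => xs k i a) @ \oo --> x i a) i (a : A i) :
 pmix p (dev a x) = 0 -> \forall k \near \oo, pmix p (dev a (xs k)) = 0.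
Proof.
move=> h0.
have hx0 : forall j c, 0 <= x j c by move=> j c; case: hx => hm _; case: (hm j).
have hxs0 : forall k j c, 0 <= xs k j c by move=> k j c; case: (hxs k) => hm _; case: (hm j).
have H : \forall k \near \oo, forall b : profile A,
    p b * \prod_j (@dev R I A i a (xs k)) j (b j) = 0.
  apply: filter_forall => b.
  have [bia|bia] := eqVneq (b i) a; last first.
    by apply: nearW => k; rewrite (bigD1 i) //= dev_ii (negbTE bia) mul0r mulr0.
  have [pb0|pb0] := eqVneq (p b) 0.
    by apply: nearW => k; rewrite pb0 mul0r.
  have pbpos : 0 < p b by rewrite lt_def pb0 hp.
  pose J := [set j | (j == i) || (x j (b j) == 0)]%SET.
  have posJ : 0 < pmix p (mixJ J b x).
    apply: lt_le_trans (pmix_ge_term _ _ b hp (fun j c => mixJ_ge0 _ J b j c hx0)).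
    apply: mulr_gt0 => //; apply: prodr_gt0 => j _.
    rewrite /mixJ; case: ifP => hj; first by rewrite eqxx ltr01.
    move: hj; rewrite inE => /negbT; rewrite negb_or => /andP[_ hj]; by rewrite lt_def hj hx0.
  have exP : exists n, [exists J' : {set I},
      [&& J' \subset J, #|J'| == n & 0 < pmix p (mixJ J' b x)]].
    by exists #|J|; apply/existsP; exists J; rewrite subxx eqxx posJ.
  case: (ex_minnP exP) => n /existsP [J' /and3P [sJ' /eqP cJ' pJ']] minn.
  have exJ' : is_exit p x J' b.
    split; last split => //.
      apply/eqP => e; move: pJ'; rewrite e.
      rewrite (pmix_ext _ _ x) ?ltxx; first by case: hx => _ ->; rewrite ltxx.
      by move=> j c; rewrite /mixJ inE.
    move=> J'' pr; apply/eqP; rewrite eq_le pmix_ge0 // ?andbT; last first.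
      by move=> j c; apply: mixJ_ge0.
    rewrite leNgt; apply/negP => pos.
    have := minn #|J''|.
    have -> : [exists J0 : {set I}, [&& J0 \subset J, #|J0| == #|J''|
             & 0 < pmix p (mixJ J0 b x)]].
      apply/existsP; exists J''.
      by rewrite (fintype.subset_trans (proper_sub pr) sJ') eqxx pos.
    move=> /(_ isT); rewrite -cJ' leqNgt; move/negP; apply.
    exact: proper_card.
  have c1 : #|J'| == 1%N.
    have hn := hE J' b; rewrite eqn_leq; apply/andP; split.
      by rewrite leqNgt; apply/negP => h2; exact: hn h2 exJ'.
    by rewrite card_gt0; case: exJ'.
  case/cards1P: c1 => j ej.
  have jJ : j \in J by apply: (fintype.subsetP sJ'); rewrite ej set11.
  have [eji|nji] := eqVneq j i.
    exfalso; move: pJ'; rewrite ej eji.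
    rewrite (pmix_ext _ _ (dev a x)) ?h0 ?ltxx // => l c.
    rewrite /mixJ inE; have [e|nl] := eqVneq l i.
      by subst l; rewrite dev_ii bia.
    by rewrite dev_ij.
  have xj0 : x j (b j) = 0.
    by move: jJ; rewrite inE (negbTE nji) /= => /eqP.
  have posj : 0 < pmix p (mixJ [set j]%SET b x) by rewrite -ej.
  have hc := @pmix_cvg R I A p (fun k => mixJ [set j]%SET b (xs k)) _ (mixJ_cvg _ _ [set j]%SET b hcvg).
  have H2 := cvgr_gt _ hc _ posj.
  near=> k.
  have hk : 0 < pmix p (mixJ [set j]%SET b (xs k)) by near: k; exact: H2.
  have hz : xs k j (b j) = 0.
    have hle := key_ineq p (xs k) b j hp (hxs0 k).
    have : xs k j (b j) * pmix p (mixJ [set j]%SET b (xs k)) = 0.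
      apply/eqP; rewrite eq_le mulr_ge0 ?andbT //; last exact: ltW.
      by case: (hxs k) => _ <-.
    by move/eqP; rewrite mulf_eq0 (gt_eqF hk) orbF => /eqP.
  by rewrite (bigD1 j) //= dev_ij // hz mul0r mulr0.
near=> k.
have hk : forall b : profile A, p b * \prod_j (@dev R I A i a (xs k)) j (b j) = 0.
  by near: k; exact: H.
rewrite /pmix; apply: big1 => b _; exact: hk.
Unshelve. all: by end_near.
Qed.

Unset Implicit Arguments.

Theorem mainTheorem7 (R : realType) (I : finType) (A : I -> finType)
  (hA : forall i, (0 < #|A i|)%N)
  (r : I -> profile A -> R) (p : profile A -> R)
  (hr : forall i a, 0 < r i a <= 1) (hp : forall a, 0 <= p a <= 1)
  (x : mprofile R A) (hx : nonabs p x) (hE : no_joint_exit p x)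
  (xs : nat -> mprofile R A) (hxs : forall k, nonabs p (xs k))
  (hcvg : forall i (a : A i), (fun k => xs k i a) @ \oo --> x i a) :
  forall i : I, rho_cvg (fun k => rho p r i (xs k)) (rho p r i x).
Proof.
move=> i.
have hp0 : forall a, 0 <= p a by move=> a; case/andP: (hp a).
have hdc : forall a : A i, forall j c,
    (fun k => @dev R I A i a (xs k) j c) @ \oo --> @dev R I A i a x j c.
  by move=> a; exact: dev_cvg xs x i a hcvg.
have hx0 : forall j c, 0 <= x j c by move=> j c; case: hx => hm _; case: (hm j).
have hS : \forall k \near \oo, forall a : A i,
    (0 < pmix p (dev a (xs k))) = (0 < pmix p (dev a x)).
  apply: filter_forall => a.
  have [pos|npos] := ltP 0 (pmix p (dev a x)).
    have H2 := cvgr_gt _ (@pmix_cvg R I A p _ _ (hdc a)) _ pos.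
    near=> k.
    have hk : 0 < pmix p (dev a (xs k)) by near: k; exact: H2.
    by rewrite hk.
  have e : pmix p (dev a x) = 0.
    by apply/eqP; rewrite eq_le npos pmix_ge0 // => j c; apply: dev_ge0.
  have H2 := @zero_eventually R I A p hp0 x hx hE xs hxs hcvg i a e.
  near=> k.
  have hk : pmix p (dev a (xs k)) = 0 by near: k; exact: H2.
  by rewrite hk ltxx.
rewrite /rho_cvg /rho.
case hex: [exists a : A i, 0 < pmix p (dev a x)].
  split.
    near=> k.
    have hk : forall a : A i, (0 < pmix p (dev a (xs k))) = (0 < pmix p (dev a x)).
      by near: k; exact: hS.
    have -> : [exists a : A i, 0 < pmix p (dev a (xs k))] =
              [exists a : A i, 0 < pmix p (dev a x)].
      by apply: eq_existsb => a; rewrite hk.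
    by rewrite hex.
  have Hc : (fun k => \big[Num.max/0]_(a : A i | 0 < pmix p (dev a x))
                 rmix p (r i) (dev a (xs k))) @ \oo -->
            \big[Num.max/0]_(a : A i | 0 < pmix p (dev a x)) rmix p (r i) (dev a x).
    apply: cvg_big; first exact: hop_max.
    by move=> a pos; apply: rmix_cvg; [exact: hdc | exact: lt0r_neq0].
  apply: (cvg_trans _ Hc); apply: near_eq_cvg.
  near=> k.
  have hk : forall a : A i, (0 < pmix p (dev a (xs k))) = (0 < pmix p (dev a x)).
    by near: k; exact: hS.
  have -> : [exists a : A i, 0 < pmix p (dev a (xs k))] =
            [exists a : A i, 0 < pmix p (dev a x)].
    by apply: eq_existsb => a; rewrite hk.
  rewrite hex /=; apply: eq_bigl => a; by rewrite hk.
near=> k.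
have hk : forall a : A i, (0 < pmix p (dev a (xs k))) = (0 < pmix p (dev a x)).
  by near: k; exact: hS.
have -> : [exists a : A i, 0 < pmix p (dev a (xs k))] =
          [exists a : A i, 0 < pmix p (dev a x)].
  by apply: eq_existsb => a; rewrite hk.
by rewrite hex.
Unshelve. all: by end_near.
Qed.
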